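(* Let $G$ be a group acting geometrically (i.e.\ properly and cocompactly by isometries) on a CAT(0) space $X$. For every $g\in G$, $$\mathcal{F}_g = L(Z_g),$$ where $\mathcal{F}_g=\{\alpha\in\partial X \mid g\alpha=\alpha\}$ is the fixed-point set of $g$ in the boundary $\partial X$, $Z_g=\{v\in G\mid gv=vg\}$ is the centralizer of $g$, and $L(Z_g)$ is the limit set of $Z_g$ in $\partial X$.
   Context: A CAT(0) space admitting a geometric group action is proper. For a proper CAT(0) space $X$, $\partial X$ denotes its visual boundary: the set of asymptotic classes of geodesic rays (two rays $\xi,\zeta$ are asymptotic if $\sup_{t\ge0}d(\xi(t),\zeta(t))<\infty$), with the cone topology, which makes $X\cup\partial X$ a compact metrizable space containing $X$ as an open dense subspace. An isometry $g$ of $X$ acts on $\partial X$ by $g(\xi(\infty))=(g\circ\xi)(\infty)$. For a subset $A\subset G$, the limit set is $L(A)=\overline{Ax_0}\cap\partial X$, where $x_0\in X$ and the closure of the orbit $Ax_0$ is taken in $X\cup\partial X$; this does not depend on the choice of $x_0$. *)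

(* Defs.v *)
From Stdlib Require Import Reals List.
Open Scope R_scope.

Definition is_metric {X : Type} (d : X -> X -> R) : Prop :=
  (forall x y, d x y = 0 <-> x = y) /\
  (forall x y, d x y = d y x) /\
  (forall x y z, d x z <= d x y + d y z).

(** Convergence of a sequence and sequential compactness of a subset
    (equivalent to compactness in a metric space). *)
Definition seq_converges {X : Type} (d : X -> X -> R) (u : nat -> X) (l : X) : Prop :=
  forall eps, 0 < eps -> exists N, forall n, (N <= n)%nat -> d (u n) l < eps.

Definition compact_set {X : Type} (d : X -> X -> R) (K : X -> Prop) : Prop :=
  forall u : nat -> X, (forall n, K (u n)) ->
  exists (phi : nat -> nat) (l : X),
    (forall n, (phi n < phi (S n))%nat) /\ K l /\ seq_converges d (fun n => u (phi n)) l.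

Definition proper_space {X : Type} (d : X -> X -> R) : Prop :=
  forall x r, compact_set d (fun y => d x y <= r).

Definition geodesic_segment {X : Type} (d : X -> X -> R) (gam : R -> X) (L : R)
  (x y : X) : Prop :=
  0 <= L /\ gam 0 = x /\ gam L = y /\
  forall s t, 0 <= s <= L -> 0 <= t <= L -> d (gam s) (gam t) = Rabs (s - t).

Definition geodesic_space {X : Type} (d : X -> X -> R) : Prop :=
  forall x y, exists gam, geodesic_segment d gam (d x y) x y.

Definition edist (p q : R * R) : R :=
  sqrt ((fst p - fst q)^2 + (snd p - snd q)^2).

(** [p] lies on the side [gam] (geodesic from [A] to [B] of length [L]) and
    [pb] is its comparison point on the segment [Ab,Bb] of the comparison
    triangle. *)
Definition on_side {X : Type} (gam : R -> X) (L : R) (Ab Bb : R * R)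
  (p : X) (pb : R * R) : Prop :=
  exists s, 0 <= s <= L /\ p = gam s /\ edist Ab pb = s /\ edist pb Bb = L - s.

Definition CAT0_ineq {X : Type} (d : X -> X -> R) : Prop :=
  forall (x y z : X) (g1 g2 g3 : R -> X) (xb yb zb : R * R),
    geodesic_segment d g1 (d x y) x y ->
    geodesic_segment d g2 (d y z) y z ->
    geodesic_segment d g3 (d z x) z x ->
    edist xb yb = d x y -> edist yb zb = d y z -> edist zb xb = d z x ->
    forall p pb q qb,
      (on_side g1 (d x y) xb yb p pb \/ on_side g2 (d y z) yb zb p pb \/
       on_side g3 (d z x) zb xb p pb) ->
      (on_side g1 (d x y) xb yb q qb \/ on_side g2 (d y z) yb zb q qb \/
       on_side g3 (d z x) zb xb q qb) ->
      d p q <= edist pb qb.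

Definition CAT0_space {X : Type} (d : X -> X -> R) : Prop :=
  is_metric d /\ geodesic_space d /\ CAT0_ineq d.

Definition geodesic_ray {X : Type} (d : X -> X -> R) (xi : R -> X) : Prop :=
  forall s t, 0 <= s -> 0 <= t -> d (xi s) (xi t) = Rabs (s - t).

(** A boundary point is the asymptotic class of a ray; we represent boundary
    points by rays and all boundary notions below are class-invariant. *)
Definition asymptotic {X : Type} (d : X -> X -> R) (xi zeta : R -> X) : Prop :=
  exists C, forall t, 0 <= t -> d (xi t) (zeta t) <= C.

Definition is_group {G : Type} (mul : G -> G -> G) (inv : G -> G) (one : G) : Prop :=
  (forall a b c, mul a (mul b c) = mul (mul a b) c) /\
  (forall a, mul one a = a) /\ (forall a, mul a one = a) /\
  (forall a, mul (inv a) a = one) /\ (forall a, mul a (inv a) = one).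

Definition isometric_action {G X : Type} (d : X -> X -> R)
  (mul : G -> G -> G) (one : G) (act : G -> X -> X) : Prop :=
  (forall x, act one x = x) /\
  (forall g h x, act (mul g h) x = act g (act h x)) /\
  (forall g x y, d (act g x) (act g y) = d x y).

Definition proper_action {G X : Type} (d : X -> X -> R) (act : G -> X -> X) : Prop :=
  forall x, exists r, 0 < r /\ exists l : list G,
    forall g, (exists y, d x y < r /\ d x (act g y) < r) -> In g l.

Definition cocompact_action {G X : Type} (d : X -> X -> R) (act : G -> X -> X) : Prop :=
  exists K, compact_set d K /\ forall x, exists g y, K y /\ x = act g y.

Definition geometric_action {G X : Type} (d : X -> X -> R)
  (mul : G -> G -> G) (one : G) (act : G -> X -> X) : Prop :=
  isometric_action d mul one act /\ proper_action d act /\ cocompact_action d act.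

(** Boundary action: g . xi(oo) = (g o xi)(oo); so g fixes the boundary point
    represented by xi iff g o xi is asymptotic to xi. *)
Definition fixes_boundary_point {G X : Type} (d : X -> X -> R)
  (act : G -> X -> X) (g : G) (xi : R -> X) : Prop :=
  asymptotic d (fun t => act g (xi t)) xi.

Definition centralizer {G : Type} (mul : G -> G -> G) (g : G) : G -> Prop :=
  fun v => mul g v = mul v g.

(** Limit set L(A) = closure(A x0) ∩ ∂X in the cone topology on X ∪ ∂X.
    The cone topology (Bridson–Haefliger II.8.6) has at c(oo) (c the ray from
    x0) the neighbourhood basis
      U(c,r,eps) = { z : d(x0,z) > r, d(p_r z, c r) < eps },
    p_r the projection to the closed ball B(x0,r); for z in X with d(x0,z)>r,
    p_r z is the point at distance r from x0 on the geodesic [x0,z].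
    Thus the boundary point of xi lies in the closure of A x0 iff every
    U(c,r,eps) meets the orbit A x0. *)
Definition in_limit_set {G X : Type} (d : X -> X -> R) (act : G -> X -> X)
  (x0 : X) (A : G -> Prop) (xi : R -> X) : Prop :=
  exists c : R -> X,
    geodesic_ray d c /\ c 0 = x0 /\ asymptotic d c xi /\
    forall r eps, 0 < r -> 0 < eps ->
      exists a, A a /\ r < d x0 (act a x0) /\
        exists sigma, geodesic_segment d sigma (d x0 (act a x0)) x0 (act a x0) /\
                      d (sigma r) (c r) < eps.

(* Main.v *)
Require Import Defs.
From Stdlib Require Import Reals List Lra Psatz Classical ClassicalEpsilon Arith Lia.
Open Scope R_scope.

Lemma d_nonneg {X} (d : X -> X -> R) : is_metric d -> forall x y, 0 <= d x y.
Proof.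
  intros [H1 [H2 H3]] x y. pose proof (H3 x y x). rewrite (H2 y x) in H.
  assert (d x x = 0) by (apply H1; auto). lra.
Qed.

Lemma d_refl {X} (d : X -> X -> R) : is_metric d -> forall x, d x x = 0.
Proof. intros [H1 _] x. apply H1; auto. Qed.

Lemma seg_len {X} (d : X -> X -> R) g L x y :
  geodesic_segment d g L x y -> d x y = L.
Proof.
  intros [HL [H0 [H1 H]]]. subst. rewrite H; try lra. rewrite Rabs_left1; lra.
Qed.

Definition rv {X : Type} (g : R -> X) (L : R) := fun s : R => g (L - s).

Lemma seg_rev {X} (d : X -> X -> R) g L x y :
  geodesic_segment d g L x y -> geodesic_segment d (rv g L) L y x.
Proof.
  intros [HL [H0 [H1 H]]]. unfold rv. repeat split; auto.
  - replace (L - 0) with L by ring. auto.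
  - replace (L - L) with 0 by ring. auto.
  - intros s t Hs Ht. rewrite H by lra. replace (L - s - (L - t)) with (-(s - t)) by ring.
    apply Rabs_Ropp.
Qed.

Lemma seg_restr {X} (d : X -> X -> R) g L x y r :
  geodesic_segment d g L x y -> 0 <= r <= L -> geodesic_segment d g r x (g r).
Proof.
  intros [HL [H0 [H1 H]]] Hr. repeat split; auto; try lra.
  intros s t Hs Ht. apply H; lra.
Qed.

Lemma sq_le_imp {a b : R} : 0 <= a -> 0 <= b -> a * a <= b * b -> a <= b.
Proof. intros. nra. Qed.

Lemma sqrt_eq_sq (u v : R) : 0 <= v -> u = v * v -> sqrt u = v.
Proof. intros Hv ->. apply sqrt_square; auto. Qed.

Lemma cat_comp {X} (d : X -> X -> R) : CAT0_space d ->
  forall p a b (s1 s2 : R -> X) L L' t,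
  geodesic_segment d s1 L p a -> geodesic_segment d s2 L' p b ->
  0 < L -> 0 < L' -> 0 <= t -> t <= L -> t <= L' ->
  d (s1 t) (s2 t) * d (s1 t) (s2 t) <= t * t * ((d a b) * (d a b) - (L - L') * (L - L')) / (L * L').
Proof.
  intros HC p a b s1 s2 L L' t H1 H2 HL HL' Ht0 HtL HtL'.
  destruct HC as [Hm [Hg Hcat]].
  pose proof (d_nonneg d Hm) as Hnn.
  pose proof (seg_len d _ _ _ _ H1) as E1.
  pose proof (seg_len d _ _ _ _ H2) as E2.
  set (D := d a b).
  assert (T1 : D <= L + L').
  { destruct Hm as [_ [Hs Ht]]. pose proof (Ht a p b). rewrite (Hs a p) in H. unfold D; lra. }
  assert (T2 : L <= L' + D).
  { destruct Hm as [_ [Hs Ht]]. pose proof (Ht p b a). rewrite (Hs b a) in H. unfold D; lra. }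
  assert (T3 : L' <= L + D).
  { destruct Hm as [_ [Hs Ht]]. pose proof (Ht p a b). unfold D; lra. }
  assert (HD : 0 <= D) by apply Hnn.
  destruct (Hg a b) as [rho Hrho].
  set (X0 := (L*L + L'*L' - D*D) / (2*L)).
  assert (HY : 0 <= L'*L' - X0*X0).
  { unfold X0.
    assert (E : L'*L' - ((L*L + L'*L' - D*D) / (2*L)) * ((L*L + L'*L' - D*D) / (2*L)) =
      ((D*D - (L-L')*(L-L')) * ((L+L')*(L+L') - D*D)) / (4*L*L)) by (field; lra).
    rewrite E. apply Rmult_le_pos; [|left; apply Rinv_0_lt_compat; nra].
    apply Rmult_le_pos; nra. }
  set (Y0 := sqrt (L'*L' - X0*X0)).
  assert (HY0 : Y0 * Y0 = L'*L' - X0*X0) by (apply sqrt_sqrt; auto).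
  assert (HX0 : 2 * L * X0 = L*L + L'*L' - D*D) by (unfold X0; field; lra).
  assert (HXL : X0 <= L').
  { destruct (Rle_dec X0 L'); auto. nra. }
  set (g3 := rv s2 L').
  pose proof (seg_rev d _ _ _ _ H2) as H3. fold g3 in H3.
  assert (Hcmp := Hcat p a b s1 rho g3 (0,0) (L,0) (X0,Y0)).
  rewrite E1 in Hcmp. fold D in Hcmp.
  assert (E3 : d b p = L') by (rewrite <- E2; apply Hm).
  rewrite E3 in Hcmp.
  specialize (Hcmp H1 Hrho H3).
  unfold edist in Hcmp; cbn [fst snd] in Hcmp.
  assert (Q : d (s1 t) (s2 t) <= sqrt ((t - t*X0/L')^2 + (0 - t*Y0/L')^2)).
  { assert (Q1 : sqrt ((0 - L) ^ 2 + (0 - 0) ^ 2) = L) by (apply sqrt_eq_sq; [lra | ring]).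
    assert (Q2 : sqrt ((L - X0) ^ 2 + (0 - Y0) ^ 2) = D) by (apply sqrt_eq_sq; [lra|]; nra).
    assert (Q3 : sqrt ((X0 - 0) ^ 2 + (Y0 - 0) ^ 2) = L') by (apply sqrt_eq_sq; [lra|]; nra).
    apply (Hcmp Q1 Q2 Q3 _ (t,0) _ (t*X0/L', t*Y0/L')).
    - left. exists t. unfold edist; cbn [fst snd]. repeat split; try lra. all: apply sqrt_eq_sq; try lra; ring.
    - right; right. exists (L' - t). unfold edist; cbn [fst snd]. repeat split; try lra.
      + unfold g3, rv. f_equal. ring.
      + apply sqrt_eq_sq; [lra|].
        transitivity ((1 - t/L')*(1-t/L') * (X0*X0 + Y0*Y0)).
        * field. lra.
        * rewrite HY0. field. lra.
      + apply sqrt_eq_sq; [lra|].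
        transitivity ((t/L')*(t/L') * (X0*X0 + Y0*Y0)).
        * field. lra.
        * rewrite HY0. field. lra. }
  assert (E4 : (t - t*X0/L')^2 + (0 - t*Y0/L')^2 = t * t * (D * D - (L - L') * (L - L')) / (L * L')).
  { transitivity (t*t*((1 - X0/L')*(1-X0/L') + Y0*Y0/(L'*L'))). field; lra.
    rewrite HY0. unfold X0. field. lra. }
  rewrite E4 in Q.
  assert (P : 0 <= t * t * (D * D - (L - L') * (L - L')) / (L * L')).
  { rewrite <- E4. apply Rplus_le_le_0_compat; apply pow2_ge_0. }
  pose proof (Hnn (s1 t) (s2 t)).
  pose proof (sqrt_sqrt _ P). nra.
Qed.

Lemma strict_ge (phi : nat -> nat) : (forall n, (phi n < phi (S n))%nat) -> forall n, (n <= phi n)%nat.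
Proof. intros H n; induction n; [lia|]. specialize (H n). lia. Qed.

Lemma tri {X} (d : X -> X -> R) : is_metric d -> forall x y z, d x z <= d x y + d y z.
Proof. intros [_ [_ H]]; auto. Qed.

Lemma sym {X} (d : X -> X -> R) : is_metric d -> forall x y, d x y = d y x.
Proof. intros [_ [H _]]; auto. Qed.

Lemma complete {X} (d : X -> X -> R) : is_metric d -> proper_space d ->
  forall u : nat -> X,
  (forall eps, 0 < eps -> exists N, forall n m, (N <= n)%nat -> (N <= m)%nat -> d (u n) (u m) < eps) ->
  exists l, seq_converges d u l.
Proof.
  intros Hm Hp u Hc.
  destruct (Hc 1 ltac:(lra)) as [N1 HN1].
  destruct (Hp (u N1) 1 (fun k => u (N1 + k)%nat)) as [phi [l [Hphi [_ Hl]]]].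
  { intros k. left. apply HN1; lia. }
  exists l. intros eps He.
  destruct (Hc (eps/2) ltac:(lra)) as [N HN].
  destruct (Hl (eps/2) ltac:(lra)) as [K HK].
  exists N. intros n Hn.
  set (k := (K + N)%nat).
  pose proof (strict_ge phi Hphi k).
  pose proof (HK k ltac:(unfold k; lia)). simpl in H0.
  pose proof (HN n (N1 + phi k)%nat Hn ltac:(unfold k in *; lia)).
  pose proof (tri d Hm (u n) (u (N1 + phi k)%nat) l). lra.
Qed.

Lemma lim_unique {X} (d : X -> X -> R) : is_metric d -> forall u l l',
  seq_converges d u l -> seq_converges d u l' -> l = l'.
Proof.
  intros Hm u l l' H1 H2.
  pose proof (d_nonneg d Hm l l') as P.
  destruct Hm as [Hz [Hs Ht]].
  apply Hz.
  destruct (Rle_lt_or_eq_dec _ _ P) as [Hlt|Heq]; [|now rewrite <- Heq].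
  destruct (H1 (d l l' / 2) ltac:(lra)) as [N1 HN1].
  destruct (H2 (d l l' / 2) ltac:(lra)) as [N2 HN2].
  specialize (HN1 (N1 + N2)%nat ltac:(lia)). specialize (HN2 (N1 + N2)%nat ltac:(lia)).
  pose proof (Ht l (u (N1+N2)%nat) l'). rewrite (Hs l (u (N1+N2)%nat)) in H. lra.
Qed.

Lemma compact_bounded {X} (d : X -> X -> R) : is_metric d -> forall K, compact_set d K ->
  forall x, exists R0, forall y, K y -> d x y <= R0.
Proof.
  intros Hm K HK x. apply NNPP. intro Hn.
  assert (H : forall n : nat, exists y, K y /\ INR n < d x y).
  { intros n. apply NNPP; intro H. apply Hn. exists (INR n). intros y Hy.
    apply Rnot_lt_le. intro. apply H. exists y; auto. }
  destruct (choice _ H) as [u Hu].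
  destruct (HK u (fun n => proj1 (Hu n))) as [phi [l [Hphi [_ Hl]]]].
  destruct (Hl 1 ltac:(lra)) as [N HN].
  destruct (INR_unbounded (d x l + 1)) as [M HM].
  set (k := (N + M)%nat).
  pose proof (HN k ltac:(unfold k; lia)). simpl in H0.
  pose proof (proj2 (Hu (phi k))).
  pose proof (strict_ge phi Hphi k).
  assert (INR M <= INR (phi k)) by (apply le_INR; unfold k in *; lia).
  pose proof (tri d Hm x l (u (phi k))) as T. rewrite (sym d Hm l) in T. lra.
Qed.

Lemma pigeon {A} (l : list A) (u : nat -> A) (I : nat) :
  (forall i, (I <= i)%nat -> In (u i) l) ->
  exists a, forall N, exists i, (N <= i)%nat /\ u i = a.
Proof.
  revert I. induction l as [|a l IH]; intros I H.
  - destruct (H I (le_n _)).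
  - destruct (classic (forall N, exists i, (N <= i)%nat /\ u i = a)) as [Ha|Ha].
    + exists a; auto.
    + apply not_all_ex_not in Ha. destruct Ha as [N HN].
      apply (IH (I + N)%nat). intros i Hi.
      destruct (H i ltac:(lia)) as [E|E]; auto.
      exfalso; apply HN. exists i. split; [lia|auto].
Qed.

Lemma frac_le (A B c P Q : R) : 0 < A -> 0 < B -> 0 <= c -> P * B <= Q * A -> c * P / A <= c * Q / B.
Proof.
  intros HA HB Hc H.
  replace (c * P / A) with (c * (P * B) * / (A * B)) by (field; lra).
  replace (c * Q / B) with (c * (Q * A) * / (A * B)) by (field; lra).
  apply Rmult_le_compat_r. left; apply Rinv_0_lt_compat; nra.
  apply Rmult_le_compat_l; auto.
Qed.

Lemma div_le (A P Q : R) : 0 < A -> P <= Q * A -> P / A <= Q.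
Proof.
  intros HA H. apply (Rmult_le_reg_r A); auto. unfold Rdiv. rewrite Rmult_assoc, Rinv_l, Rmult_1_r; lra.
Qed.

Lemma ray_seg {X} (d : X -> X -> R) xi m : geodesic_ray d xi -> 0 <= m ->
  geodesic_segment d xi m (xi 0) (xi m).
Proof. intros H Hm. repeat split; auto. intros s t Hs Ht. apply H; lra. Qed.

Lemma ray_dist {X} (d : X -> X -> R) xi s t : geodesic_ray d xi -> 0 <= s -> s <= t ->
  d (xi s) (xi t) = t - s.
Proof. intros H Hs Ht. rewrite H by lra. rewrite Rabs_left1; lra. Qed.

Lemma ray_exists {X} (d : X -> X -> R) : CAT0_space d -> proper_space d ->
  forall xi x0, geodesic_ray d xi ->
  exists c, geodesic_ray d c /\ c 0 = x0 /\ asymptotic d c xi.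
Proof.
  intros HC Hp xi x0 Hxi.
  pose proof HC as [Hm [Hg _]].
  pose proof (d_nonneg d Hm) as Hnn.
  destruct (choice (fun (n : nat) g => geodesic_segment d g (d x0 (xi (INR n))) x0 (xi (INR n))))
    as [sg Hsg].
  { intro n. apply Hg. }
  set (Ln := fun n : nat => d x0 (xi (INR n))).
  set (b := d x0 (xi 0)).
  assert (Hb : 0 <= b) by apply Hnn.
  assert (HLn : forall n, INR n - b <= Ln n <= INR n + b).
  { intro n. pose proof (ray_dist d xi 0 (INR n) Hxi ltac:(lra) (pos_INR n)).
    pose proof (tri d Hm x0 (xi 0) (xi (INR n))).
    pose proof (tri d Hm (xi 0) x0 (xi (INR n))). rewrite (sym d Hm (xi 0) x0) in H1.
    unfold Ln, b. lra. }
  assert (Hest : forall t n m, 0 <= t -> (n <= m)%nat -> 2 * b + t + 1 <= INR n ->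
     d (sg n t) (sg m t) * d (sg n t) (sg m t) <= t * t * (24 * (b + 1)) / INR n).
  { intros t n m Ht Hnm Hn.
    assert (Hnm' : INR n <= INR m) by (apply le_INR; auto).
    pose proof (HLn n). pose proof (HLn m).
    pose proof (cat_comp d HC x0 _ _ (sg n) (sg m) (Ln n) (Ln m) t (Hsg n) (Hsg m)
       ltac:(lra) ltac:(lra) Ht ltac:(lra) ltac:(lra)) as Hc.
    rewrite (ray_dist d xi (INR n) (INR m) Hxi (pos_INR n) Hnm') in Hc.
    eapply Rle_trans; [exact Hc|].
    apply frac_le; try nra.
    assert (Tri1 : Ln m - Ln n <= INR m - INR n).
    { pose proof (tri d Hm x0 (xi (INR n)) (xi (INR m))).
      rewrite (ray_dist d xi (INR n) (INR m) Hxi (pos_INR n) Hnm') in H1. unfold Ln. lra. }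
    assert (Tri2 : Ln n - Ln m <= INR m - INR n).
    { pose proof (tri d Hm x0 (xi (INR m)) (xi (INR n))).
      rewrite (sym d Hm (xi (INR m))), (ray_dist d xi (INR n) (INR m) Hxi (pos_INR n) Hnm') in H1.
      unfold Ln. lra. }
    set (a1 := INR m - INR n - (Ln m - Ln n)).
    set (a2 := INR m - INR n + (Ln m - Ln n)).
    assert (E : (INR m - INR n) * (INR m - INR n) - (Ln n - Ln m) * (Ln n - Ln m) = a1 * a2)
      by (unfold a1, a2; ring).
    rewrite E.
    assert (0 <= a1 <= 2 * b) by (unfold a1; lra).
    assert (0 <= a2 <= 2 * INR m + 2 * b) by (unfold a2; lra).
    assert (a1 * a2 <= 2 * b * (2 * INR m + 2 * b)) by nra.
    assert (INR n / 2 <= Ln n) by lra.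
    assert (INR m / 2 <= Ln m) by lra.
    assert (2 * b * (2 * INR m + 2 * b) <= 6 * (b + 1) * INR m) by nra.
    assert (2 * b * (2 * INR m + 2 * b) * INR n <= 6 * (b + 1) * INR m * INR n).
    { apply Rmult_le_compat_r; [lra|]. auto. }
    assert (INR n * INR m <= 4 * (Ln n * Ln m)) by nra.
    assert (6 * (b + 1) * INR m * INR n <= 24 * (b + 1) * (Ln n * Ln m)) by nra.
    nra. }
  assert (Hcv : forall t, 0 <= t -> exists l, seq_converges d (fun n => sg n t) l).
  { intros t Ht. apply (complete d Hm Hp). intros eps He.
    destruct (INR_unbounded (2 * b + t + 1 + t * t * (24 * (b + 1)) / (eps * eps))) as [N HN].
    exists N. intros n m Hn Hm'.
    assert (Hn' : INR N <= INR n) by (apply le_INR; auto).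
    assert (Hm'' : INR N <= INR m) by (apply le_INR; auto).
    assert (Q : 0 <= t * t * (24 * (b + 1)) / (eps * eps)).
    { apply Rmult_le_pos; [nra|]. left; apply Rinv_0_lt_compat; nra. }
    assert (Hgen : forall n m, (N <= n)%nat -> (n <= m)%nat -> d (sg n t) (sg m t) < eps).
    { intros n0 m0 H0 H1. assert (INR N <= INR n0) by (apply le_INR; auto).
      pose proof (Hest t n0 m0 Ht H1 ltac:(lra)).
      assert (t * t * (24 * (b + 1)) / INR n0 < eps * eps).
      { apply (Rmult_lt_reg_r (/ (eps * eps))). apply Rinv_0_lt_compat; nra.
        rewrite Rinv_r by nra.
        replace (t * t * (24 * (b + 1)) / INR n0 * / (eps * eps)) with
          (t * t * (24 * (b + 1)) / (eps * eps) / INR n0) by (field; split; lra).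
        apply (Rmult_lt_reg_r (INR n0)); [lra|]. unfold Rdiv at 1.
        rewrite Rmult_assoc, Rinv_l, Rmult_1_r, Rmult_1_l by lra. lra. }
      pose proof (Hnn (sg n0 t) (sg m0 t)). nra. }
    destruct (Nat.le_ge_cases n m).
    - apply Hgen; auto.
    - rewrite (sym d Hm). apply Hgen; auto. }
  set (c := fun t => epsilon (inhabits x0) (fun l => seq_converges d (fun n => sg n t) l)).
  assert (Hc : forall t, 0 <= t -> seq_converges d (fun n => sg n t) (c t)).
  { intros t Ht. unfold c. apply epsilon_spec. apply Hcv; auto. }
  exists c.
  assert (Hev : forall t eps, 0 <= t -> 0 < eps -> forall T, exists n : nat,
     T <= INR n /\ t <= Ln n /\ d (sg n t) (c t) < eps).
  { intros t eps Ht He T. destruct (Hc t Ht eps He) as [N HN].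
    destruct (INR_unbounded (Rabs T + t + b)) as [M HM]. pose proof (Rle_abs T). pose proof (Rabs_pos T).
    exists (N + M)%nat. pose proof (HN (N + M)%nat ltac:(lia)). simpl in H.
    pose proof (HLn (N + M)%nat). rewrite plus_INR in *. pose proof (pos_INR N).
    repeat split; try lra. }
  assert (Hray : geodesic_ray d c).
  { intros s t Hs Ht.
    assert (forall eps, 0 < eps -> exists n : nat, s <= Ln n /\ t <= Ln n /\
              d (sg n s) (c s) < eps /\ d (sg n t) (c t) < eps).
    { intros eps He. destruct (Hc s Hs eps He) as [N1 H1]. destruct (Hc t Ht eps He) as [N2 H2].
      destruct (INR_unbounded (s + t + b)) as [M HM].
      exists (N1 + N2 + M)%nat. pose proof (HLn (N1 + N2 + M)%nat).
      rewrite !plus_INR in H. pose proof (pos_INR N1). pose proof (pos_INR N2).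
      repeat split; try lra. apply H1; lia. apply H2; lia. }
    apply Rle_antisym; apply Rle_plus_epsilon; intros eps He;
      destruct (H (eps / 2) ltac:(lra)) as [n [Q1 [Q2 [Q3 Q4]]]];
      destruct (Hsg n) as [_ [_ [_ Hs']]];
      unfold Ln in Q1, Q2; pose proof (Hs' s t ltac:(lra) ltac:(lra)).
    - pose proof (tri d Hm (c s) (sg n s) (c t)). pose proof (tri d Hm (sg n s) (sg n t) (c t)).
      rewrite (sym d Hm (c s) (sg n s)) in H1. lra.
    - pose proof (tri d Hm (sg n s) (c s) (sg n t)). pose proof (tri d Hm (c s) (c t) (sg n t)).
      rewrite (sym d Hm (c t) (sg n t)) in H2. lra. }
  split; [exact Hray|]. split.
  - apply (lim_unique d Hm (fun n => sg n 0)); [apply Hc; lra|].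
    intros eps He. exists 0%nat. intros n _. destruct (Hsg n) as [_ [H0 _]]. rewrite H0.
    rewrite d_refl; auto.
  - exists (3 * b + 1). intros t Ht.
    destruct (Rle_dec t b) as [Htb|Htb].
    + assert (c 0 = x0).
      { apply (lim_unique d Hm (fun n => sg n 0)); [apply Hc; lra|].
        intros eps He. exists 0%nat. intros n _. destruct (Hsg n) as [_ [H0 _]]. rewrite H0.
        rewrite d_refl; auto. }
      pose proof (tri d Hm (c t) (c 0) (xi t)). pose proof (tri d Hm (c 0) (xi 0) (xi t)).
      rewrite (Hray t 0 Ht ltac:(lra)) in H0. rewrite H in H1, H0.
      rewrite (ray_dist d xi 0 t Hxi ltac:(lra) ltac:(lra)) in H1.
      rewrite Rabs_right in H0 by lra. fold b in H1. lra.
    + destruct (Hev t 1 Ht ltac:(lra) (t + 2 * b + 1)) as [m [Hm1 [Hm2 Hm3]]].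
      set (M := INR m) in *.
      pose proof (HLn m). fold M in H.
      pose proof (seg_rev d _ _ _ _ (ray_seg d xi M Hxi ltac:(lra))) as S1.
      pose proof (seg_rev d _ _ _ _ (Hsg m)) as S2. change (d x0 (xi M)) with (Ln m) in S2.
      pose proof (cat_comp d HC _ _ _ _ _ M (Ln m) (M - t) S1 S2 ltac:(lra) ltac:(lra)
         ltac:(lra) ltac:(lra) ltac:(lra)) as Hc2.
      unfold rv in Hc2. replace (M - (M - t)) with t in Hc2 by ring.
      rewrite (sym d Hm (xi 0) x0) in Hc2. fold b in Hc2.
      assert (Hq : d (xi t) (sg m (Ln m - (M - t))) * d (xi t) (sg m (Ln m - (M - t))) <= 2 * b * b).
      { eapply Rle_trans; [exact Hc2|].
        apply Rle_trans with ((M - t) * (M - t) * (b * b) / (M * Ln m)).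
        { assert (0 < M * Ln m) by nra.
          apply frac_le; try nra.
          assert (0 <= (M - Ln m) * (M - Ln m) * (M * Ln m)).
          { apply Rmult_le_pos; [apply Rle_0_sqr | lra]. }
          nra. }
        apply div_le; [nra|].
        assert (Z1 : (M - t) * (M - t) <= 2 * (M * Ln m)) by nra.
        assert (Z2 : 0 <= b * b) by nra.
        pose proof (Rmult_le_compat_r _ _ _ Z2 Z1). nra. }
      assert (Hq2 : d (xi t) (sg m (Ln m - (M - t))) <= 2 * b).
      { apply sq_le_imp; [apply Hnn | lra | nra]. }
      destruct (Hsg m) as [_ [_ [_ Hs']]]. change (d x0 (xi (INR m))) with (Ln m) in Hs'.
      pose proof (Hs' t (Ln m - (M - t)) ltac:(lra) ltac:(lra)).
      pose proof (tri d Hm (c t) (sg m t) (xi t)).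
      pose proof (tri d Hm (sg m t) (sg m (Ln m - (M - t))) (xi t)).
      rewrite (sym d Hm (c t) (sg m t)) in H1. rewrite (sym d Hm (sg m (Ln m - (M - t))) (xi t)) in H2.
      assert (Rabs (t - (Ln m - (M - t))) <= b) by (apply Rabs_le; lra).
      lra.
Qed.

Lemma cent_lemma {G} (mul : G -> G -> G) inv one : is_group mul inv one ->
  forall g p q, mul (inv p) (mul g p) = mul (inv q) (mul g q) ->
  mul g (mul p (inv q)) = mul (mul p (inv q)) g.
Proof.
  intros [Ha [H1l [H1r [Hil Hir]]]] g p q E.
  assert (E2 : mul g p = mul p (mul (inv q) (mul g q))).
  { rewrite <- E. rewrite Ha, Hir, H1l. auto. }
  rewrite Ha, E2. rewrite <- !Ha. rewrite Hir, H1r. auto.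
Qed.

Lemma act_inv_l {G X} (d : X -> X -> R) mul inv one (act : G -> X -> X) :
  is_group mul inv one -> isometric_action d mul one act ->
  forall h y, act (inv h) (act h y) = y.
Proof.
  intros [_ [_ [_ [Hil _]]]] [H1 [Hm _]] h y. rewrite <- Hm, Hil; auto.
Qed.

Lemma act_inv_r {G X} (d : X -> X -> R) mul inv one (act : G -> X -> X) :
  is_group mul inv one -> isometric_action d mul one act ->
  forall h y, act h (act (inv h) y) = y.
Proof.
  intros [_ [_ [_ [_ Hir]]]] [H1 [Hm _]] h y. rewrite <- Hm, Hir; auto.
Qed.

Lemma seg_act {X} (d : X -> X -> R) (f : X -> X) : (forall x y, d (f x) (f y) = d x y) ->
  forall s L x y, geodesic_segment d s L x y -> geodesic_segment d (fun t => f (s t)) L (f x) (f y).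
Proof.
  intros Hf s L x y [HL [H0 [H1 H]]]. repeat split; auto; try congruence.
  intros a b Ha Hb. rewrite Hf; auto.
Qed.

Lemma bounded_repeat {G X} (d : X -> X -> R) mul inv one (act : G -> X -> X) :
  is_metric d -> proper_space d -> is_group mul inv one -> isometric_action d mul one act ->
  proper_action d act ->
  forall k0 C (f : nat -> G), (forall n, d k0 (act (f n) k0) <= C) ->
  exists fs, forall N, exists n, (N <= n)%nat /\ f n = fs.
Proof.
  intros Hm Hp Hgr Hiso Hpa k0 C f Hf.
  destruct (Hp k0 C (fun n => act (f n) k0) Hf) as [phi [l [Hphi [_ Hl]]]].
  destruct (Hpa k0) as [r0 [Hr0 [lst Hlst]]].
  destruct (Hl (r0 / 2) ltac:(lra)) as [I HI].
  set (j := phi I).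
  destruct (pigeon (map (mul (f j)) lst) (fun i => f (phi i)) I) as [a Ha].
  { intros i Hi.
    set (h := mul (inv (f j)) (f (phi i))).
    assert (Eh : f (phi i) = mul (f j) h).
    { unfold h. destruct Hgr as [Ha [H1l [_ [_ Hir]]]]. rewrite Ha, Hir, H1l. auto. }
    rewrite Eh. apply in_map. apply Hlst. exists k0. split.
    - rewrite d_refl; auto.
    - destruct Hiso as [_ [Hmu Hd]].
      rewrite <- (Hd (f j)). rewrite <- Hmu, <- Eh.
      pose proof (HI i Hi). pose proof (HI I (le_n _)). simpl in *.
      pose proof (tri d Hm (act (f j) k0) l (act (f (phi i)) k0)).
      rewrite (sym d Hm l (act (f (phi i)) k0)) in H1. unfold j in *. lra. }
  exists a. intros N. destruct (Ha N) as [i [Hi Ei]].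
  exists (phi i). split; auto. pose proof (strict_ge phi Hphi i). lia.
Qed.

Lemma sq_le_lt {a b : R} : 0 <= a -> 0 < b -> a * a < b * b -> a < b.
Proof. intros. nra. Qed.

Lemma div_lt (A P Q : R) : 0 < A -> P < Q * A -> P / A < Q.
Proof.
  intros HA H. apply (Rmult_lt_reg_r A); auto. unfold Rdiv. rewrite Rmult_assoc, Rinv_l, Rmult_1_r; lra.
Qed.

Lemma forward {X G : Type} (d : X -> X -> R)
  (mul : G -> G -> G) (inv : G -> G) (one : G) (act : G -> X -> X) :
  CAT0_space d -> proper_space d ->
  is_group mul inv one ->
  geometric_action d mul one act ->
  forall (x0 : X) (g : G) (xi : R -> X),
    geodesic_ray d xi ->
    fixes_boundary_point d act g xi -> in_limit_set d act x0 (centralizer mul g) xi.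
Proof.
  intros HC Hp Hgr [Hiso [Hpa [K [HK Hcov]]]] x0 g xi Hxi [C HCg].
  pose proof HC as [Hm [Hgs _]].
  pose proof (d_nonneg d Hm) as Hnn.
  pose proof Hiso as [_ [Hmu Hd]].
  destruct (ray_exists d HC Hp xi x0 Hxi) as [c [Hc [Hc0 [C1 HC1]]]].
  exists c. split; [auto|]. split; [auto|]. split; [exists C1; auto|].
  destruct (Hcov x0) as [h0 [k0 [Hk0 _]]].
  destruct (compact_bounded d Hm K HK k0) as [RK HRK].
  destruct (choice (fun (n : nat) (p : G * X) => K (snd p) /\ xi (INR n) = act (fst p) (snd p)))
    as [hy Hhy].
  { intro n. destruct (Hcov (xi (INR n))) as [h [y [Hy E]]]. exists (h, y); auto. }
  set (h := fun n => fst (hy n)). set (y := fun n => snd (hy n)).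
  set (f := fun n => mul (inv (h n)) (mul g (h n))).
  assert (Hfy : forall n, act (f n) (y n) = act (inv (h n)) (act g (xi (INR n)))).
  { intro n. unfold f. rewrite !Hmu. f_equal. f_equal. unfold h, y. destruct (Hhy n); auto. }
  assert (Hdisp : forall n, d (y n) (act (f n) (y n)) <= C).
  { intro n. rewrite Hfy. rewrite <- (Hd (h n)). rewrite (act_inv_r d mul inv one act Hgr Hiso).
    unfold h, y. destruct (Hhy n) as [_ E]. rewrite <- E. rewrite (sym d Hm).
    apply HCg. apply pos_INR. }
  assert (Hfb : forall n, d k0 (act (f n) k0) <= RK + C + RK).
  { intro n. assert (Ky : K (y n)) by (unfold y; destruct (Hhy n); auto).
    pose proof (tri d Hm k0 (y n) (act (f n) k0)).
    pose proof (tri d Hm (y n) (act (f n) (y n)) (act (f n) k0)).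
    rewrite Hd in H0. pose proof (HRK _ Ky). pose proof (Hdisp n).
    rewrite (sym d Hm (y n) k0) in H0. lra. }
  destruct (bounded_repeat d mul inv one act Hm Hp Hgr Hiso Hpa k0 _ f Hfb) as [fs Hfs].
  destruct (Hfs 0%nat) as [m0 [_ Em0]].
  set (B := d (act (inv (h m0)) x0) k0 + RK).
  set (E := B + C1).
  assert (HE : 0 <= E).
  { unfold E, B. pose proof (Hnn (act (inv (h m0)) x0) k0). pose proof (HRK k0 Hk0).
    pose proof (Hnn k0 k0). pose proof (HC1 0 ltac:(lra)). pose proof (Hnn (c 0) (xi 0)). lra. }
  intros r eps Hr He.
  destruct (INR_unbounded (r + 2 * E + 1 + 2 * (r * r * E * E + 1) / (eps * eps))) as [N HN].
  destruct (Hfs N) as [n [Hn En]].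
  assert (HnN : INR N <= INR n) by (apply le_INR; auto).
  set (a := mul (h n) (inv (h m0))).
  assert (Q0 : 0 <= 2 * (r * r * E * E + 1) / (eps * eps)).
  { apply Rmult_le_pos; [nra|]. left; apply Rinv_0_lt_compat; nra. }
  exists a. split.
  { unfold centralizer, a. apply (cent_lemma mul inv one Hgr). fold (f n) (f m0). congruence. }
  assert (Hax : d (act a x0) (c (INR n)) <= E).
  { assert (Ky : K (y n)) by (unfold y; destruct (Hhy n); auto).
    assert (Exi : xi (INR n) = act (h n) (y n)) by (unfold h, y; destruct (Hhy n); auto).
    assert (d (act a x0) (xi (INR n)) <= B).
    { rewrite Exi. unfold a. rewrite Hmu, Hd.
      pose proof (tri d Hm (act (inv (h m0)) x0) k0 (y n)). pose proof (HRK _ Ky). unfold B. lra. }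
    pose proof (tri d Hm (act a x0) (xi (INR n)) (c (INR n))).
    pose proof (HC1 (INR n) (pos_INR n)). rewrite (sym d Hm (xi (INR n))) in H0.
    unfold E. lra. }
  set (L := d x0 (act a x0)).
  assert (Hcn : d x0 (c (INR n)) = INR n).
  { rewrite <- Hc0. rewrite (ray_dist d c 0 (INR n) Hc ltac:(lra) (pos_INR n)). lra. }
  assert (HL : INR n - E <= L <= INR n + E).
  { pose proof (tri d Hm x0 (act a x0) (c (INR n))). pose proof (tri d Hm x0 (c (INR n)) (act a x0)).
    rewrite (sym d Hm (c (INR n)) (act a x0)) in H0. unfold L. lra. }
  split; [lra|].
  destruct (Hgs x0 (act a x0)) as [sg Hsg]. exists sg. split; [auto|].
  fold L in Hsg.
  pose proof (ray_seg d c (INR n) Hc (pos_INR n)) as Sc. rewrite Hc0 in Sc.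
  pose proof (cat_comp d HC _ _ _ _ _ _ _ r Sc Hsg ltac:(lra) ltac:(lra) ltac:(lra) ltac:(lra) ltac:(lra))
    as Hcmp.
  rewrite (sym d Hm (sg r)).
  apply (sq_le_lt); [apply Hnn | lra|].
  eapply Rle_lt_trans; [exact Hcmp|].
  set (D := d (c (INR n)) (act a x0)).
  assert (HD : D <= E) by (unfold D; rewrite (sym d Hm); auto).
  assert (HD0 : 0 <= D) by apply Hnn.
  apply Rle_lt_trans with (r * r * (E * E) / (INR n * L)).
  { apply frac_le; try nra.
    assert (0 <= (INR n - L) * (INR n - L) * (INR n * L)) by (apply Rmult_le_pos; [apply Rle_0_sqr|nra]).
    assert (D * D <= E * E) by nra. assert (0 <= INR n * L) by nra.
    pose proof (Rmult_le_compat_r _ _ _ H1 H0). nra. }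
  apply div_lt; [nra|].
  assert (Hn1 : 1 <= INR n) by lra.
  assert (INR n / 2 <= L) by lra.
  assert (2 * (r * r * E * E + 1) <= INR n * (eps * eps)).
  { assert (2 * (r * r * E * E + 1) / (eps * eps) <= INR n) by lra.
    apply (Rmult_le_compat_r (eps * eps)) in H0; [|nra].
    replace (2 * (r * r * E * E + 1) / (eps * eps) * (eps * eps)) with (2 * (r * r * E * E + 1)) in H0
      by (field; lra). lra. }
  assert (INR n * (eps * eps) / 2 <= eps * eps * (INR n * L)) by nra.
  nra.
Qed.

Lemma backward {X G : Type} (d : X -> X -> R)
  (mul : G -> G -> G) (inv : G -> G) (one : G) (act : G -> X -> X) :
  CAT0_space d -> 
  geometric_action d mul one act ->
  forall (x0 : X) (g : G) (xi : R -> X),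
    in_limit_set d act x0 (centralizer mul g) xi -> fixes_boundary_point d act g xi.
Proof.
  intros HC [Hiso _] x0 g xi [c [Hc [Hc0 [[C1 HC1] Hcone]]]].
  pose proof HC as [Hm [Hgs _]].
  pose proof (d_nonneg d Hm) as Hnn.
  pose proof Hiso as [_ [Hmu Hd]].
  set (dl := d x0 (act g x0)).
  assert (Hdl : 0 <= dl) by apply Hnn.
  assert (Hct : forall t, 0 <= t -> d x0 (c t) = t).
  { intros t Ht. rewrite <- Hc0. rewrite (ray_dist d c 0 t Hc ltac:(lra) Ht). lra. }
  assert (Key : forall t, 0 <= t -> d (act g (c t)) (c t) <= 5 * dl + 2).
  { intros t Ht.
    destruct (Rle_dec t dl) as [Htd|Htd].
    { pose proof (tri d Hm (act g (c t)) (act g x0) (c t)).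
      pose proof (tri d Hm (act g x0) x0 (c t)).
      rewrite <- Hc0 in H at 2. rewrite Hd in H. rewrite Hc0 in H.
      rewrite (sym d Hm (c t) x0), Hct in H by lra.
      rewrite Hct in H0 by lra. rewrite (sym d Hm (act g x0) x0) in H0. fold dl in H0. lra. }
    set (R0 := t + 2 * dl + 1).
    destruct (Hcone R0 1 ltac:(unfold R0; lra) ltac:(lra)) as [a [Ha [HR [sg [Hsg Hsc]]]]].
    set (L := d x0 (act a x0)) in *.
    assert (HRL : t + 2 * dl + 1 < L) by (unfold R0 in HR; lra).
    assert (S1 : d (sg t) (c t) <= 1).
    { pose proof (seg_restr d sg L x0 (act a x0) R0 Hsg ltac:(unfold R0 in *; lra)) as Sa.
      pose proof (ray_seg d c R0 Hc ltac:(unfold R0; lra)) as Sb. rewrite Hc0 in Sb.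
      pose proof (cat_comp d HC _ _ _ _ _ _ _ t Sa Sb ltac:(unfold R0; lra) ltac:(unfold R0; lra)
         Ht ltac:(unfold R0; lra) ltac:(unfold R0; lra)) as Hq.
      apply sq_le_imp; [apply Hnn|lra|].
      eapply Rle_trans; [exact Hq|].
      replace (R0 - R0) with 0 by ring.
      apply div_le; [unfold R0; nra|].
      pose proof (Hnn (sg R0) (c R0)).
      assert (d (sg R0) (c R0) * d (sg R0) (c R0) <= 1) by nra.
      assert (t * t <= R0 * R0) by (unfold R0; nra).
      nra. }
    set (z := act g (act a x0)).
    assert (Ez : z = act a (act g x0)).
    { unfold z. rewrite <- !Hmu. unfold centralizer in Ha. rewrite Ha. auto. }
    destruct (Hgs x0 z) as [rho Hrho].
    set (L2 := d x0 z) in *.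
    assert (Hzd : d (act a x0) z = dl).
    { rewrite Ez, Hd. auto. }
    assert (HL2 : L - dl <= L2 <= L + dl).
    { pose proof (tri d Hm x0 (act a x0) z). pose proof (tri d Hm x0 z (act a x0)).
      rewrite (sym d Hm z (act a x0)) in H0. unfold L2, L. lra. }
    assert (S2 : d (sg t) (rho t) <= 2 * dl).
    { pose proof (cat_comp d HC _ _ _ _ _ _ _ t Hsg Hrho ltac:(lra) ltac:(lra) Ht ltac:(lra) ltac:(lra)) as Hq.
      rewrite Hzd in Hq.
      apply sq_le_imp; [apply Hnn|lra|].
      eapply Rle_trans; [exact Hq|].
      apply Rle_trans with (t * t * (dl * dl) / (L * L2)).
      { apply frac_le; try nra.
        assert (0 <= (L - L2) * (L - L2) * (L * L2)) by (apply Rmult_le_pos; [apply Rle_0_sqr|nra]).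
        nra. }
      apply div_le; [nra|].
      assert (t * t <= 2 * (L * L2)) by nra.
      assert (0 <= dl * dl) by nra.
      pose proof (Rmult_le_compat_r _ _ _ H0 H). nra. }
    pose proof (seg_act d (act g) (Hd g) _ _ _ _ Hsg) as Hgs'.
    fold z in Hgs'.
    pose proof (seg_rev d _ _ _ _ Hgs') as R1.
    pose proof (seg_rev d _ _ _ _ Hrho) as R2.
    assert (S3 : d (rho (L2 - (L - t))) (act g (sg t)) <= 2 * dl).
    { pose proof (cat_comp d HC _ _ _ _ _ _ _ (L - t) R2 R1 ltac:(lra) ltac:(lra) ltac:(lra)
         ltac:(lra) ltac:(lra)) as Hq.
      unfold rv in Hq. replace (L - (L - t)) with t in Hq by ring.
      rewrite (sym d Hm x0 (act g x0)) in Hq. fold dl in Hq.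
      apply sq_le_imp; [apply Hnn|lra|].
      eapply Rle_trans; [exact Hq|].
      apply Rle_trans with ((L - t) * (L - t) * (dl * dl) / (L2 * L)).
      { apply frac_le; try nra.
        assert (0 <= (L2 - L) * (L2 - L) * (L2 * L)) by (apply Rmult_le_pos; [apply Rle_0_sqr|nra]).
        rewrite (sym d Hm (act g x0) x0). fold dl. nra. }
      apply div_le; [nra|].
      assert ((L - t) * (L - t) <= 2 * (L2 * L)) by nra.
      assert (0 <= dl * dl) by nra.
      pose proof (Rmult_le_compat_r _ _ _ H0 H). nra. }
    destruct Hrho as [_ [_ [_ Hr]]].
    pose proof (Hr t (L2 - (L - t)) ltac:(lra) ltac:(lra)) as S4.
    assert (S4' : d (rho t) (rho (L2 - (L - t))) <= dl) by (rewrite S4; apply Rabs_le; lra).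
    pose proof (tri d Hm (act g (c t)) (act g (sg t)) (c t)).
    pose proof (tri d Hm (act g (sg t)) (sg t) (c t)).
    pose proof (tri d Hm (act g (sg t)) (rho t) (sg t)).
    pose proof (tri d Hm (act g (sg t)) (rho (L2 - (L - t))) (rho t)).
    rewrite Hd in H. rewrite (sym d Hm (c t) (sg t)) in H.
    rewrite (sym d Hm (rho t) (sg t)) in H1.
    rewrite (sym d Hm (act g (sg t)) (rho (L2 - (L - t)))) in H2.
    rewrite (sym d Hm (rho (L2 - (L - t))) (rho t)) in H2.
    lra. }
  exists (2 * C1 + 5 * dl + 2). intros t Ht.
  pose proof (tri d Hm (act g (xi t)) (act g (c t)) (xi t)).
  pose proof (tri d Hm (act g (c t)) (c t) (xi t)).
  rewrite Hd in H. rewrite (sym d Hm (xi t) (c t)) in H.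
  pose proof (HC1 t Ht). pose proof (Key t Ht). lra.
Qed.

Theorem theorem1 (X G : Type) (d : X -> X -> R)
  (mul : G -> G -> G) (inv : G -> G) (one : G) (act : G -> X -> X) :
  CAT0_space d -> proper_space d ->
  is_group mul inv one ->
  geometric_action d mul one act ->
  forall (x0 : X) (g : G) (xi : R -> X),
    geodesic_ray d xi ->
    (fixes_boundary_point d act g xi <-> in_limit_set d act x0 (centralizer mul g) xi).
Proof.
  intros HC Hp Hgr Hga x0 g xi Hxi. split.
  - apply (forward d mul inv one act); auto.
  - intro H. exact (backward d mul inv one act HC Hga x0 g xi H).
Qed.
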